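(* For each $j=0,\dots,4$, $P\Gamma^{\mathbb{R}}_j\cong PO(\Psi_j)$, where $O(\Psi_j)$ is the group of automorphisms of $\mathbb{Z}^5$ preserving the quadratic form $\Psi_j$ and $PO(\Psi_j)=O(\Psi_j)/\{\pm1\}$, with $\Psi_j(y_0,\dots,y_4)=-y_0^2+\sum_{i=1}^{4-j}y_i^2+3\sum_{i=5-j}^{4}y_i^2$ (so $j$ of the coefficients of $y_1^2,\dots,y_4^2$, namely the last $j$, equal $3$ and the others equal $1$).
   Context: Let $\omega=e^{2\pi i/3}$, $\mathcal{E}=\mathbb{Z}[\omega]$, $\theta=\sqrt{-3}$. Let $\Lambda=\mathcal{E}^5$ with Hermitian form $h(x,y)=-x_0\bar y_0+x_1\bar y_1+\dots+x_4\bar y_4$, let $\Gamma$ be its group of $\mathcal{E}$-linear isometries, and $P\Gamma=\Gamma/\{\text{unit scalars}\}$. Complex hyperbolic space $\mathbb{C}H^4$ is the set of $h$-negative lines in $\mathbb{C}^5=\Lambda\otimes_{\mathcal{E}}\mathbb{C}$, on which $P\Gamma$ acts. For $j=0,\dots,4$ let $\xi_j$ be the antilinear map $(x_0,\dots,x_4)\mapsto(\bar x_0,\dots,\bar x_{4-j},-\bar x_{5-j},\dots,-\bar x_4)$ (conjugate all coordinates, negate the last $j$), let $H^4_j$ be its fixed-point set in $\mathbb{C}H^4$ (a copy of real hyperbolic $4$-space), and let $P\Gamma^{\mathbb{R}}_j$ be the stabilizer of $H^4_j$ in $P\Gamma$. *)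

(* Defs.v *)
From HB Require Import structures.
From mathcomp Require Import all_boot all_order all_algebra all_field.
Set Implicit Arguments. Unset Strict Implicit. Unset Printing Implicit Defensive.
Import Order.TTheory GRing.Theory Num.Theory.
Local Open Scope ring_scope.

(* omega = e^{2 pi i/3} = (-1 + i sqrt 3)/2 *)
Definition omega : algC := (-1 + 'i * sqrtC 3) / 2.

Definition inE (x : algC) : Prop :=
  exists a b : int, x = a%:~R + b%:~R * omega.

Definition mxE5 (g : 'M[algC]_5) : Prop := forall i k, inE (g i k).
Definition vecE5 (x : 'cV[algC]_5) : Prop := forall i, inE (x i 0).

Definition hsign (i : 'I_5) : algC := if i == ord0 then -1 else 1.
Definition hform (x y : 'cV[algC]_5) : algC :=
  \sum_(i < 5) hsign i * x i 0 * (y i 0)^*.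

(* Gamma: E-linear isometries of Lambda = E^5 (as 5x5 matrices acting on
   column vectors, bijective on Lambda) *)
Definition Gamma (g : 'M[algC]_5) : Prop :=
  [/\ mxE5 g, g \in unitmx, mxE5 (invmx g) &
      forall x y, vecE5 x -> vecE5 y -> hform (g *m x) (g *m y) = hform x y].

Definition unit_scalar (g : 'M[algC]_5) : Prop :=
  exists u : algC, [/\ u != 0, inE u, inE u^-1 & g = u%:M].

Definition xi (j : nat) (x : 'cV[algC]_5) : 'cV[algC]_5 :=
  \col_(i < 5) ((if (5 - j <= i)%N then -1 else 1) * (x i 0)^*).

(* x spans a line belonging to H^4_j: an h-negative line fixed by xi_j *)
Definition inH (j : nat) (x : 'cV[algC]_5) : Prop :=
  [/\ x != 0, hform x x < 0 & exists c : algC, xi j x = c *: x].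

(* preimage in Gamma of the stabilizer P Gamma^R_j of H^4_j *)
Definition StabR (j : nat) (g : 'M[algC]_5) : Prop :=
  [/\ Gamma g,
      forall x, inH j x -> inH j (g *m x) &
      forall y, inH j y -> exists x, inH j x /\ g *m x = y].

Definition psicoef (j : nat) (i : 'I_5) : int :=
  if i == ord0 then -1 else if (5 - j <= i)%N then 3 else 1.
Definition Psi (j : nat) (y : 'cV[int]_5) : int :=
  \sum_(i < 5) psicoef j i * (y i 0) ^+ 2.

Definition OPsi (j : nat) (A : 'M[int]_5) : Prop :=
  A \in unitmx /\ forall y, Psi j (A *m y) = Psi j y.

(* isomorphism  (StabR j)/{unit scalars}  ~=  O(Psi_j)/{+-1}, encoded by a map
   f from StabR j to O(Psi_j) that is a homomorphism modulo +-1, whose kernel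
   modulo +-1 is exactly the unit scalars, and which is onto modulo +-1. *)
Definition pm_eq (A B : 'M[int]_5) : Prop := A = B \/ A = - B.

Definition PGammaR_iso_PO (j : nat) : Prop :=
  exists f : 'M[algC]_5 -> 'M[int]_5,
  [/\ forall g, StabR j g -> OPsi j (f g),
      forall g1 g2, StabR j g1 -> StabR j g2 ->
        pm_eq (f (g1 *m g2)) (f g1 *m f g2),
      forall g, StabR j g -> (pm_eq (f g) 1%:M <-> unit_scalar g) &
      forall A, OPsi j A -> exists g, StabR j g /\ pm_eq (f g) A].

(* Main.v *)
Require Import Defs.
From mathcomp Require Import all_boot all_order all_algebra all_field.
From HB Require Import structures.
From mathcomp Require Import ring lra zify.
From Stdlib Require Import ClassicalEpsilon.
Set Implicit Arguments. Unset Strict Implicit. Unset Printing Implicit Defensive.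
Import Order.TTheory GRing.Theory Num.Theory.
Local Open Scope ring_scope.
Notation isE := Defs.inE.

Definition s3 : algC := 'i * sqrtC 3.
Lemma s3_sq : s3 ^+ 2 = -3.
Proof. by rewrite /s3 exprMn sqrCi sqrtCK mulN1r. Qed.
Lemma s3_conj : s3^* = - s3.
Proof. rewrite /s3 rmorphM /= conjCi geC0_conj ?sqrtC_ge0 ?ler0n //; ring. Qed.
Lemma om_def : omega = (-1 + s3) / 2.
Proof. by []. Qed.
Lemma om_sq : omega ^+ 2 = -1 - omega.
Proof.
have h : omega ^+ 2 + omega + 1 = (s3 ^+ 2 + 3) / 4 by rewrite om_def; field.
apply/eqP; rewrite -subr_eq0. have -> : omega ^+ 2 - (-1 - omega) = omega ^+ 2 + omega + 1 by ring.
by rewrite h s3_sq addNr mul0r.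
Qed.
Lemma om_conj : omega^* = -1 - omega.
Proof. rewrite om_def rmorphM /= rmorphD /= rmorphN /= conjC1 s3_conj fmorphV /= conjC_nat. by field. Qed.
Lemma om_sq0 : omega ^+ 2 + omega + 1 = 0.
Proof. rewrite om_sq; ring. Qed.
Lemma by_om (x y k : algC) : x - y = k * (omega ^+ 2 + omega + 1) -> x = y.
Proof. by rewrite om_sq0 mulr0 => /eqP; rewrite subr_eq0 => /eqP. Qed.
Lemma s3_om : s3 = 1 + 2 * omega.
Proof. rewrite om_def; by field. Qed.
Lemma s3_neq0 : s3 != 0.
Proof. apply/negP => /eqP h; have := s3_sq; rewrite h expr0n /= => /eqP. by rewrite eq_sym oppr_eq0 pnatr_eq0. Qed.
Lemma om3 : omega ^+ 3 = 1.
Proof. apply: (@by_om _ _ (omega - 1)). rewrite exprS. ring. Qed.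

Lemma conjZ (n : int) : (n%:~R : algC)^* = n%:~R.
Proof. by rewrite rmorph_int. Qed.


Lemma inE_int (n : int) : isE n%:~R.
Proof. by exists n, 0; rewrite mul0r addr0. Qed.
Lemma inE0 : isE 0. Proof. by have := inE_int 0. Qed.
Lemma inE1 : isE 1. Proof. by have := inE_int 1. Qed.
Lemma inE_om : isE omega. Proof. by exists 0, 1; rewrite mul1r add0r. Qed.
Lemma inED x y : isE x -> isE y -> isE (x + y).
Proof.
move=> [a [b ->]] [c [d ->]]; exists (a + c), (b + d).
by rewrite !rmorphD /=; ring.
Qed.
Lemma inEN x : isE x -> isE (- x).
Proof. move=> [a [b ->]]; exists (- a), (- b); rewrite !rmorphN /=; ring. Qed.
Lemma inEB x y : isE x -> isE y -> isE (x - y).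
Proof. by move=> hx hy; apply: inED => //; apply: inEN. Qed.
Lemma inEM x y : isE x -> isE y -> isE (x * y).
Proof.
move=> [a [b ->]] [c [d ->]]; exists (a*c - b*d), (a*d+b*c-b*d).
rewrite !rmorphB !rmorphD !rmorphM /=.
by apply: (@by_om _ _ (b%:~R * d%:~R : algC)); ring.
Qed.
Lemma inE_conj x : isE x -> isE x^*.
Proof.
move=> [a [b ->]]; exists (a - b), (- b).
rewrite rmorphD rmorphM /= !conjZ om_conj !rmorphB !rmorphN /=; ring.
Qed.
Lemma inE_s3 : isE s3.
Proof. rewrite s3_om; apply: inED; first exact: inE1. apply: inEM => //; last exact: inE_om.
by have := inE_int 2. Qed.

Lemma om_indep (p q : int) : p%:~R + q%:~R * omega = 0 :> algC -> p = 0 /\ q = 0.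
Proof.
move=> h.
have hc : p%:~R + q%:~R * (-1 - omega) = 0 :> algC.
  by rewrite -om_conj -(conjZ p) -(conjZ q) -rmorphM -rmorphD /= h conjC0.
have hq : q%:~R * s3 = 0 :> algC.
  by rewrite s3_om; apply/eqP; rewrite -[X in _ == X](subr0 0) -{1}h -{1}hc; apply/eqP; ring.
move/eqP: hq; rewrite mulf_eq0 (negPf s3_neq0) orbF intr_eq0 => /eqP hq0.
move: h; rewrite hq0 mul0r addr0 => /eqP; rewrite intr_eq0 => /eqP; by [].
Qed.

Lemma conjE_diff (a b : int) :
  (a%:~R + b%:~R * omega)^* - (a%:~R + b%:~R * omega) = - (b%:~R * s3) :> algC.
Proof. rewrite rmorphD rmorphM /= !conjZ om_conj s3_om; ring. Qed.
Lemma conjE_sum (a b : int) :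
  (a%:~R + b%:~R * omega)^* + (a%:~R + b%:~R * omega) = (2 * a - b)%:~R :> algC.
Proof. rewrite rmorphD rmorphM /= !conjZ om_conj rmorphB rmorphM /=; ring. Qed.

Lemma inE_real x : isE x -> x^* = x -> exists n : int, x = n%:~R.
Proof.
move=> [a [b ->]] h; exists a.
have := conjE_diff a b; rewrite h subrr => /esym/eqP; rewrite oppr_eq0 mulf_eq0.
rewrite (negPf s3_neq0) orbF intr_eq0 => /eqP ->; by rewrite mul0r addr0.
Qed.

Lemma inE_imag x : isE x -> x^* = - x -> exists n : int, x = n%:~R * s3.
Proof.
move=> [a [b ->]] h; exists a.
have := conjE_sum a b; rewrite h addNr => /esym/eqP; rewrite intr_eq0 => /eqP hb.
have -> : b = 2 * a by lia.
rewrite s3_om rmorphM /=; ring.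
Qed.

Lemma int_mul1 (u v : int) : u * v = 1 -> u = 1 \/ u = -1.
Proof. rewrite mulrC => /intUnitRing.unitzPl /orP [] /eqP ->; by [left|right]. Qed.

Lemma pow6 (y : algC) : y ^+ 3 = 1 -> y ^+ 6 = 1 /\ (- y) ^+ 6 = 1.
Proof.
move=> h; have h6 : y ^+ 6 = 1 by rewrite (_ : 6 = 3 * 2)%N // exprM h expr1n.
by split => //; rewrite (_ : 6 = 2 * 3)%N // exprM sqrrN -exprM.
Qed.

Lemma unitE x : isE x -> isE x^-1 -> x != 0 -> x * x^* = 1 /\ x ^+ 6 = 1.
Proof.
move=> [a [b hx]] [c [d hy]] x0.
have hxy : x * x^-1 = 1 by rewrite divff.
have : ((a*c - b*d - 1)%:~R + (a*d+b*c-b*d)%:~R * omega = (0:algC)).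
  have e : (a%:~R + b%:~R * omega) * (c%:~R + d%:~R * omega) = (1:algC) by rewrite -hx -hy.
  rewrite -(subrr (1:algC)); rewrite -[X in _ = X - _]e !rmorphB !rmorphD !rmorphM /=.
  by apply: (@by_om _ _ (- (b%:~R * d%:~R) : algC)); ring.
move/om_indep => [h1 h2].
have hN : (a*a - a*b + b*b) * (c*c - c*d + d*d) = 1.
  have -> : (a*a - a*b + b*b) * (c*c - c*d + d*d) =
    (a*c-b*d)^2 - (a*c-b*d)*(a*d+b*c-b*d) + (a*d+b*c-b*d)^2 by ring.
  have -> : a*c - b*d = 1 by lia.
  rewrite h2; ring.
have g1 : 0 <= a*a - a*b + b*b.
  have : 4 * (a*a - a*b + b*b) = (2*a-b)^2 + 3*b^2 by ring. nia.
have g2 : 0 <= c*c - c*d + d*d.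
  have : 4 * (c*c - c*d + d*d) = (2*c-d)^2 + 3*d^2 by ring. nia.
have hN1 : a*a - a*b + b*b = 1 by case: (int_mul1 hN) => //; move: g1; generalize (a*a - a*b + b*b); lia.
split.
  rewrite hx; apply: (@by_om _ _ (- (b%:~R ^+ 2) : algC)).
  rewrite rmorphD rmorphM /= !conjZ om_conj.
  rewrite -[X in _ - X]mulr1z -[in X in _ - X]hN1 !rmorphD !rmorphN !rmorphM /=; ring.
have : (a = 1 /\ b = 0) \/ (a = -1 /\ b = 0) \/ (a = 0 /\ b = 1) \/ (a = 0 /\ b = -1)
   \/ (a = 1 /\ b = 1) \/ (a = -1 /\ b = -1).
  have hb : -1 <= b <= 1 by nia.
  have ha : -1 <= a <= 1 by nia.
  lia.
have o2 : (omega ^+ 2) ^+ 3 = 1 by rewrite -exprM mulnC exprM om3 expr1n.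
have [p1 n1] := pow6 (expr1n _ 3 : (1 : algC) ^+ 3 = 1).
have [po no] := pow6 om3.
have [pq nq] := pow6 o2.
have i1 : ((1:int)%:~R : algC) = 1 by [].
have im1 : ((-1:int)%:~R : algC) = -1 by [].
rewrite hx; case=> [[-> ->]|[[-> ->]|[[-> ->]|[[-> ->]|[[-> ->]|[-> ->]]]]]];
  rewrite ?i1 ?im1 ?mul0r ?addr0 ?add0r ?mul1r ?mulN1r //.
- by rewrite (_ : 1 + omega = - omega ^+ 2) // om_sq; ring.
- by rewrite (_ : -1 - omega = omega ^+ 2) // om_sq.
Qed.

Lemma real_unit (r : algC) : isE r -> isE r^-1 -> r != 0 -> r^* = r -> r = 1 \/ r = -1.
Proof.
move=> hr hri r0 hc.
have [n hn] := inE_real hr hc.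
have hc' : (r^-1)^* = r^-1 by rewrite fmorphV /= hc.
have [m hm] := inE_real hri hc'.
have : ((n * m)%:~R : algC) = (1%:~R) by rewrite rmorphM /= -hn -hm divff.
move/intr_inj/int_mul1 => [] h; [left|right]; rewrite hn h //.
Qed.


Definition Eb (x : algC) : bool :=
  if excluded_middle_informative (isE x) then true else false.
Lemma EbP x : Eb x <-> isE x.
Proof. by rewrite /Eb; case: excluded_middle_informative. Qed.

Lemma Eb_subring : GRing.subring_closed (Eb : {pred algC}).
Proof.
split; first by apply/EbP; apply: inE1.
- by move=> x y /EbP hx /EbP hy; apply/EbP; apply: inEB.
- by move=> x y /EbP hx /EbP hy; apply/EbP; apply: inEM.
Qed.
HB.instance Definition _ := GRing.isSubringClosed.Build algC Eb Eb_subring.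

Lemma det_inE (g : 'M[algC]_5) : mxE5 g -> isE (\det g).
Proof.
move=> h; apply/EbP; rewrite -[Eb _]/(_ \in Eb).
apply: rpred_sum => s _; apply: rpredM; first exact: rpred_sign.
by apply: rpred_prod => i _; apply/EbP.
Qed.

Definition sg j (i : 'I_5) : algC := if (5 - j <= i)%N then -1 else 1.
Definition dd j (i : 'I_5) : algC := if (5 - j <= i)%N then s3 else 1.

Lemma sg2 j i : sg j i * sg j i = 1.
Proof. by rewrite /sg; case: ifP => _; rewrite ?mulrNN mulr1. Qed.
Lemma sg_conj j i : (sg j i)^* = sg j i.
Proof. by rewrite /sg; case: ifP => _; rewrite ?rmorphN /= conjC1. Qed.
Lemma sg_neq0 j i : sg j i != 0.
Proof. by rewrite /sg; case: ifP => _; rewrite ?oppr_eq0 oner_eq0. Qed.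
Lemma dd_conj j i : (dd j i)^* = sg j i * dd j i.
Proof. by rewrite /sg /dd; case: ifP => _; rewrite ?s3_conj ?conjC1 ?mulN1r ?mulr1. Qed.
Lemma dd_neq0 j i : dd j i != 0.
Proof. by rewrite /dd; case: ifP => _; rewrite ?s3_neq0 ?oner_eq0. Qed.
Lemma sg0 j : (j <= 4)%N -> sg j ord0 = 1.
Proof. by move=> hj; rewrite /sg /=; case: ifP => // h; lia. Qed.
Lemma dd0 j : (j <= 4)%N -> dd j ord0 = 1.
Proof. by move=> hj; rewrite /dd /=; case: ifP => // h; lia. Qed.
Lemma dd_psi j i : (j <= 4)%N ->
  hsign i * sg j i * dd j i ^+ 2 = (psicoef j i)%:~R.
Proof.
move=> hj; rewrite /hsign /sg /dd /psicoef.
case: (eqVneq i ord0) => [-> | ni0] /=.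
  case: ifP => h; first lia.
  by rewrite mulr1 expr1n mulr1.
case: ifP => _ /=; last by rewrite mulr1 expr1n mulr1.
by rewrite s3_sq mul1r mulN1r opprK.
Qed.

Definition Lift j (A : 'M[int]_5) : 'M[algC]_5 :=
  \matrix_(i, k) (dd j i / dd j k * (A i k)%:~R).

Lemma Lift_mul j A B : Lift j (A *m B) = Lift j A *m Lift j B.
Proof.
apply/matrixP => i k; rewrite !mxE rmorph_sum /= mulr_sumr; apply: eq_bigr => m _.
rewrite !mxE rmorphM /=.
have := dd_neq0 j m; have := dd_neq0 j k; have := dd_neq0 j i.
move: (dd j i) (dd j m) (dd j k) => a b c a0 c0 b0. by field; apply/andP.
Qed.

Lemma Lift1 j : Lift j 1%:M = 1%:M.
Proof.
apply/matrixP => i k; rewrite !mxE.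
case: (eqVneq i k) => [-> | ne] /=; first by rewrite divff ?dd_neq0 // mul1r.
by rewrite mulr0.
Qed.

Lemma LiftN j A : Lift j (- A) = - Lift j A.
Proof. by apply/matrixP => i k; rewrite !mxE rmorphN /= mulrN. Qed.

Definition rel j (g : 'M[algC]_5) (A : 'M[int]_5) : Prop :=
  exists nu : algC, [/\ nu != 0, isE nu, isE nu^-1 & g = nu *: Lift j A].

Lemma rel_uniq j g A B : rel j g A -> rel j g B -> pm_eq A B.
Proof.
move=> [nu [n0 hn hni ->]] [nu' [n0' hn' hni' e]].
have eAB : forall a b, nu * (A a b)%:~R = nu' * (B a b)%:~R.
  move=> a b; move/matrixP: e => /(_ a b); rewrite !mxE.
  have := dd_neq0 j a; have := dd_neq0 j b.
  move: (dd j a) (dd j b) => x y y0 x0.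
  rewrite mulrCA [RHS]mulrCA => /(mulfI _); apply.
  by rewrite mulf_neq0 // invr_eq0.
case: (boolP [exists i, exists k, A i k != 0]) => [/existsP [i /existsP [k Aik]] | ].
  have Bik : B i k != 0.
    apply/negP => /eqP b0; move: (eAB i k); rewrite b0 mulr0 => /eqP.
    by rewrite mulf_eq0 (negPf n0) intr_eq0 (negPf Aik).
  set r := nu' / nu.
  have hr : forall a b, (A a b)%:~R = r * (B a b)%:~R :> algC.
    by move=> a b; rewrite /r mulrAC -eAB mulrAC divff // mul1r.
  have rE : r = (A i k)%:~R / (B i k)%:~R.
    by rewrite hr mulfK // intr_eq0.
  have rc : r^* = r by rewrite rE rmorphM /= fmorphV /= !conjZ.
  have rE1 : isE r by apply: inEM.
  have rE2 : isE r^-1 by rewrite /r invfM invrK mulrC; apply: inEM.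
  have r0 : r != 0 by rewrite /r mulf_neq0 // invr_eq0.
  case: (real_unit rE1 rE2 r0 rc) => hr1; [left|right]; apply/matrixP => a b;
    apply: (@intr_inj algC); rewrite hr hr1 ?mul1r // mulN1r !mxE rmorphN //.
rewrite negb_exists => /forallP hA.
have A0 : A = 0 by apply/matrixP => a b; have := hA a; rewrite negb_exists => /forallP /(_ b);
  rewrite negbK => /eqP ->; rewrite mxE.
have B0 : B = 0.
  apply/matrixP => a b; move: (eAB a b); rewrite A0 mxE mulr0 => /esym/eqP.
  by rewrite mulf_eq0 (negPf n0') intr_eq0 => /eqP ->; rewrite ?mxE.
by left; rewrite A0 B0.
Qed.


Definition Jm : 'M[algC]_5 := diag_mx (\row_i hsign i).
Definition mc (m n : nat) (M : 'M[algC]_(m, n)) := map_mx (@Num.conj algC) M.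
Definition Pm j : 'M[int]_5 := diag_mx (\row_i psicoef j i).

Lemma formE n (X Y : 'M[algC]_(5, n)) a b :
  (X^T *m Jm *m mc Y) a b = \sum_i hsign i * X i a * (Y i b)^*.
Proof.
rewrite /Jm mul_mx_diag !mxE; apply: eq_bigr => i _; rewrite !mxE; ring.
Qed.

Lemma formPE j n (A : 'M[int]_(5, n)) a b :
  (A^T *m Pm j *m A) a b = \sum_i psicoef j i * A i a * A i b.
Proof.
rewrite /Pm mul_mx_diag !mxE; apply: eq_bigr => i _; rewrite !mxE; ring.
Qed.

Lemma hform_mx x y : hform x y = (x^T *m Jm *m mc y) 0 0.
Proof. by rewrite formE /hform; apply: eq_bigr => i _; rewrite ?mxE. Qed.

Lemma deltaE (X : 'M[algC]_5) a b :
  (delta_mx (0:'I_1) a *m X *m delta_mx b (0:'I_1)) 0 0 = X a b.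
Proof. by rewrite -rowE -colE !mxE. Qed.

Lemma mc_delta a : mc (delta_mx a (0 : 'I_1)) = delta_mx a 0 :> 'cV[algC]_5.
Proof. by apply/matrixP => i k; rewrite !mxE conjC_nat. Qed.

Lemma vecE5_delta a : vecE5 (delta_mx a 0).
Proof. move=> i; rewrite mxE; exact: (inE_int (Posz _)). Qed.

Lemma gJg g : Gamma g -> g^T *m Jm *m mc g = Jm.
Proof.
move=> [_ _ _ hg]; apply/matrixP => a b.
rewrite -deltaE -[RHS]deltaE -trmx_delta.
have := hg _ _ (vecE5_delta a) (vecE5_delta b).
rewrite !hform_mx trmx_mul /mc map_mxM -/(mc _) mc_delta.
by move=> <-; rewrite !mulmxA.
Qed.

Lemma lift_form j nu A a b : (j <= 4)%N ->
  \sum_i hsign i * (nu *: Lift j A) i a * ((nu *: Lift j A) i b)^*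
  = nu * nu^* * ((A^T *m Pm j *m A) a b)%:~R / (dd j a * (dd j b)^*).
Proof.
move=> hj; rewrite formPE rmorph_sum /= mulr_sumr mulr_suml; apply: eq_bigr => i _.
rewrite !mxE rmorphM /= rmorphM /= rmorphM /= fmorphV /= conjZ !dd_conj !intrM -dd_psi //.
have := dd_neq0 j a; have := dd_neq0 j b; have := sg_neq0 j b.
move: (dd j a) (dd j b) (sg j b) => x y z z0 y0 x0.
by field; rewrite x0 y0 z0.
Qed.

Lemma psi_hsign j i : (j <= 4)%N -> (psicoef j i)%:~R = hsign i * dd j i * (dd j i)^*.
Proof. by move=> hj; rewrite -dd_psi // dd_conj; ring. Qed.

Lemma rel_APA j g A : (j <= 4)%N -> Gamma g -> rel j g A -> A^T *m Pm j *m A = Pm j.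
Proof.
move=> hj hg [nu [n0 hn hni ge]].
have [nn _] := unitE hn hni n0.
have e := gJg hg.
apply/matrixP => a b; apply: (@intr_inj algC).
move/matrixP: e => /(_ a b); rewrite formE ge lift_form // nn mul1r.
have := dd_neq0 j a; have := dd_neq0 j b; rewrite -(conjC_eq0 (dd j b)).
move=> y0 x0 h.
rewrite -[LHS](divfK (mulf_neq0 x0 y0)) h /Jm /Pm !mxE.
case: (eqVneq a b) => [<- | ne] /=; last by rewrite !mulr0n mul0r.
by rewrite !mulr1n psi_hsign //; ring.
Qed.


Lemma PsiE j y : Psi j y = (y^T *m Pm j *m y) 0 0.
Proof. by rewrite formPE /Psi; apply: eq_bigr => i _; rewrite expr2 mulrA. Qed.

Lemma deltaEi (X : 'M[int]_5) a b :
  (delta_mx (0:'I_1) a *m X *m delta_mx b (0:'I_1)) 0 0 = X a b.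
Proof. by rewrite -rowE -colE !mxE. Qed.

Lemma detP_neq0 j : \det (Pm j) != 0.
Proof.
rewrite /Pm det_diag; apply/prodf_neq0 => i _; rewrite mxE /psicoef.
by case: (i == ord0) => //; case: ifP.
Qed.

Lemma APA_OPsi j A : A^T *m Pm j *m A = Pm j -> OPsi j A.
Proof.
move=> h; split.
  rewrite unitmxE; apply/unitrPr; exists (\det A).
  have := congr1 determinant h; rewrite !det_mulmx det_tr.
  move=> e; apply: (mulIf (detP_neq0 j)); rewrite mul1r -{2}e; ring.
move=> y; rewrite !PsiE trmx_mul !mulmxA.
have e : y^T *m A^T *m Pm j *m A = y^T *m (A^T *m Pm j *m A) by rewrite !mulmxA.
by rewrite e h.
Qed.

Lemma OPsi_APA j A : OPsi j A -> A^T *m Pm j *m A = Pm j.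
Proof.
move=> [_ hA].
set Q := A^T *m Pm j *m A - Pm j.
have hQ : forall y : 'cV[int]_5, (y^T *m Q *m y) 0 0 = 0.
  move=> y; rewrite /Q mulmxBr mulmxBl.
  have -> : forall (X Y : 'M[int]_1), (X - Y) 0 0 = X 0 0 - Y 0 0 by move=> X Y; rewrite !mxE.
  have e : y^T *m (A^T *m Pm j *m A) *m y = (A *m y)^T *m Pm j *m (A *m y)
    by rewrite trmx_mul !mulmxA.
  by rewrite e -!PsiE hA subrr.
have Qs : forall a b, Q a b = Q b a.
  move=> a b; rewrite -[in LHS](trmxK Q) mxE; congr (_ b a).
  by rewrite /Q linearB /= trmx_mul trmx_mul trmxK /Pm tr_diag_mx mulmxA.
have Qaa : forall a, Q a a = 0.
  by move=> a; rewrite -deltaEi -trmx_delta hQ.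
suff Q0 : Q = 0 by apply/eqP; rewrite -subr_eq0 -/Q Q0.
apply/matrixP => a b; rewrite [RHS]mxE.
have addE : forall X Y : 'M[int]_1, (X + Y) 0 0 = X 0 0 + Y 0 0 by move=> X Y; rewrite mxE.
have := hQ (delta_mx a 0 + delta_mx b 0).
clearbody Q.
rewrite !linearD /= !mulmxDl !addE !trmx_delta !deltaEi Qaa Qaa (Qs b a).
move=> h; have : 2 * Q a b = 0 by rewrite -h; ring.
by move/eqP; rewrite mulf_eq0 => /orP [] /eqP.
Qed.


Lemma APA_div3 j A (i k : 'I_5) : (j <= 4)%N -> A^T *m Pm j *m A = Pm j -> (5 - j <= k)%N -> ~~ (5 - j <= i)%N ->
  exists N : int, A i k = 3 * N.
Proof.
move=> hj h hk hi.
have uA : A^T \in unitmx by rewrite unitmx_tr; case: (APA_OPsi h).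
set w := Pm j *m A *m delta_mx k (0:'I_1).
have ew : A^T *m w = 3 *: delta_mx k 0.
  rewrite /w !mulmxA h; apply/matrixP => m n; rewrite -colE !mxE /psicoef.
  case: (eqVneq m k) => [-> | ne] /=.
    have k0 : (k == ord0) = false by apply/eqP => e; move: hk hj; rewrite e /=; lia.
    by rewrite hk k0 (ord1 n) eqxx mulr1n mulr1.
  by rewrite mulr0n mulr0.
have ew2 : w = 3 *: (invmx A^T *m delta_mx k 0).
  by rewrite scalemxAr -ew mulKmx.
have wi : w i 0 = psicoef j i * A i k by rewrite /w -colE mxE /Pm mul_diag_mx !mxE.
exists (psicoef j i * (invmx A^T *m delta_mx k (0:'I_1)) i 0).
have p2 : psicoef j i * psicoef j i = 1.
  rewrite /psicoef (negPf hi); by case: (i == ord0).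
have -> : A i k = psicoef j i * w i 0 by rewrite wi mulrA p2 mul1r.
by rewrite ew2 mxE; ring.
Qed.

Lemma Lift_E j A : (j <= 4)%N -> A^T *m Pm j *m A = Pm j -> mxE5 (Lift j A).
Proof.
move=> hj h i k; rewrite mxE /dd.
case: (boolP (5 - j <= i)%N) => hi; case: (boolP (5 - j <= k)%N) => hk.
- by rewrite divff ?s3_neq0 // mul1r; apply: inE_int.
- by rewrite divr1; apply: inEM; [exact: inE_s3 | exact: inE_int].
- have [N ->] := APA_div3 hj h hk hi.
  have -> : 1 / s3 * (3 * N)%:~R = - (N%:~R * s3).
    rewrite intrM /=. have := s3_sq; have := s3_neq0; move: s3 => s s0 e.
    rewrite (_ : (3 : int)%:~R = 3 :> algC) //.
    by rewrite -(opprK 3) -e; field.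
  by apply: inEN; apply: inEM; [exact: inE_int | exact: inE_s3].
- by rewrite divr1 mul1r; apply: inE_int.
Qed.

Lemma Lift_unit j A : A \in unitmx ->
  Lift j A \in unitmx /\ invmx (Lift j A) = Lift j (invmx A).
Proof.
move=> uA.
have e : Lift j A *m Lift j (invmx A) = 1%:M by rewrite -Lift_mul mulmxV // Lift1.
have [uL _] := mulmx1_unit e.
split => //; by rewrite -[LHS]mulmx1 -e mulKmx.
Qed.

Lemma inv_APA j A : A \in unitmx -> A^T *m Pm j *m A = Pm j ->
  (invmx A)^T *m Pm j *m invmx A = Pm j.
Proof.
move=> uA h; rewrite -{1}h.
have -> : (invmx A)^T *m (A^T *m Pm j *m A) *m invmx A
   = (A *m invmx A)^T *m Pm j *m (A *m invmx A) by rewrite trmx_mul !mulmxA.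
by rewrite mulmxV // trmx1 mul1mx mulmx1.
Qed.

Lemma Lift_J j A : (j <= 4)%N -> A^T *m Pm j *m A = Pm j ->
  (Lift j A)^T *m Jm *m mc (Lift j A) = Jm.
Proof.
move=> hj h; apply/matrixP => a b; rewrite formE -[Lift j A]scale1r lift_form //.
rewrite h rmorph1 mulr1 mul1r /Pm /Jm !mxE.
case: (eqVneq a b) => [<- | ne] /=; last by rewrite !mulr0n mul0r.
rewrite !mulr1n psi_hsign //.
have := dd_neq0 j a; rewrite -(conjC_eq0 (dd j a)) => y0.
have x0 := dd_neq0 j a.
by rewrite -(mulrA (hsign a)) mulfK // mulf_neq0.
Qed.

Lemma hform_pres (L : 'M[algC]_5) x y : L^T *m Jm *m mc L = Jm ->
  hform (L *m x) (L *m y) = hform x y.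
Proof.
move=> h; rewrite !hform_mx trmx_mul /mc map_mxM -/(mc L) -/(mc y).
have -> : x^T *m L^T *m Jm *m (mc L *m mc y) = x^T *m (L^T *m Jm *m mc L) *m mc y
  by rewrite !mulmxA.
by rewrite h.
Qed.

Lemma sub_by (x y w k : algC) : x - y = (w - 1) * k -> w = 1 -> x = y.
Proof. by move=> h e; move: h; rewrite e subrr mul0r => /eqP; rewrite subr_eq0 => /eqP. Qed.

Lemma xi_Lift j A x : xi j (Lift j A *m x) = Lift j A *m xi j x.
Proof.
apply/matrixP => i z; rewrite !mxE rmorph_sum mulr_sumr; apply: eq_bigr => m _.
rewrite !mxE rmorphM /= rmorphM /= rmorphM /= fmorphV /= conjZ !dd_conj.
rewrite -/(sg j i) -/(sg j m).
have := sg2 j i; have := sg2 j m; have := sg_neq0 j m; have := dd_neq0 j m.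
move=> d0 v0 hv hu.
have vi : (sg j m)^-1 = sg j m by rewrite -[LHS]mul1r -hv mulfK.
rewrite invfM vi.
apply: (@sub_by _ _ _ (dd j i * sg j m / dd j m * (A i m)%:~R * (x m 0)^*) _ hu); ring.
Qed.

Lemma inH_map j (L : 'M[algC]_5) x : L \in unitmx -> L^T *m Jm *m mc L = Jm ->
  (forall x, xi j (L *m x) = L *m xi j x) -> inH j x -> inH j (L *m x).
Proof.
move=> uL hJ hxi [nz neg [c hc]]; split.
- apply/negP => /eqP e; move: nz; by rewrite -(mulKmx uL x) e mulmx0 eqxx.
- by rewrite hform_pres.
- by exists c; rewrite hxi hc scalemxAr.
Qed.

Lemma Stab_Lift j A : (j <= 4)%N -> OPsi j A -> StabR j (Lift j A).
Proof.
move=> hj hA; have h := OPsi_APA hA; have uA := hA.1.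
have [uL iL] := Lift_unit j uA.
have hi := inv_APA uA h.
have uiA : invmx A \in unitmx by rewrite unitmx_inv.
have [uL' _] := Lift_unit j uiA.
split.
- split; first exact: Lift_E.
  + exact: uL.
  + by rewrite iL; apply: Lift_E.
  + by move=> x y _ _; apply: hform_pres; apply: Lift_J.
- move=> x hx; apply: inH_map => //; first exact: Lift_J.
  exact: xi_Lift.
- move=> y hy; exists (invmx (Lift j A) *m y); split; last by rewrite mulKVmx.
  rewrite iL; apply: inH_map => //; first exact: Lift_J.
  exact: xi_Lift.
Qed.


Definition vec (a : algC) (k : 'I_5) (b : algC) : 'cV[algC]_5 :=
  a *: delta_mx ord0 0 + b *: delta_mx k 0.

Lemma vecE a k b m : (vec a k b) m 0 = a * (m == ord0)%:R + b * (m == k)%:R.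
Proof. by rewrite !mxE eqxx !andbT. Qed.

Lemma gvec (g : 'M[algC]_5) a k b i :
  (g *m vec a k b) i 0 = g i ord0 * a + g i k * b.
Proof.
rewrite /vec mulmxDr -!scalemxAr -!colE !mxE; ring.
Qed.

Lemma hform_vec a k b : k != ord0 ->
  hform (vec a k b) (vec a k b) = - (a * a^*) + b * b^*.
Proof.
move=> k0; rewrite /hform (bigD1 ord0) //= (bigD1 k) //= big1 ?addr0.
  rewrite !vecE eqxx (negPf k0) eq_sym (negPf k0) /hsign eqxx (negPf k0).
  by rewrite eqxx /= !mulr1 !mulr0 addr0 add0r; ring.
move=> m /andP [m0 mk]; rewrite vecE (negPf m0) (negPf mk) !mulr0 addr0 mulr0 mul0r.
by [].
Qed.

Lemma xi_vec j a k b : (j <= 4)%N -> k != ord0 -> a^* = a -> sg j k * b^* = b ->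
  xi j (vec a k b) = vec a k b.
Proof.
move=> hj k0 ha hb; apply/matrixP => m z; rewrite (ord1 z) mxE -/(sg j m) !vecE.
case: (eqVneq m ord0) => [-> | m0].
  by rewrite eq_sym (negPf k0) sg0 // !mulr1 mulr0 addr0 mul1r ha.
rewrite mulr0 add0r; case: (eqVneq m k) => [-> | mk]; first by rewrite !mulr1.
by rewrite !mulr0 conjC0 mulr0.
Qed.

Lemma dd_norm j k : dd j k * (dd j k)^* = (if (5 - j <= k)%N then 3%:R else 1%:R).
Proof.
rewrite dd_conj /sg /dd; case: ifP => _; last by rewrite !mulr1.
by rewrite mulrCA mulN1r -expr2 s3_sq opprK.
Qed.

Lemma neg_val (a m : nat) : (m < a * a)%N -> - ((a%:R : algC) * (a%:R)^*) + m%:R < 0.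
Proof.
move=> h; rewrite conjC_nat -natrM addrC subr_lt0 ltr_nat //.
Qed.

Lemma vec_neq0 a k b : k != ord0 -> a != 0 -> vec a k b != 0.
Proof.
move=> k0 a0; apply/negP => /eqP /matrixP /(_ ord0 0); rewrite vecE !mxE eqxx eq_sym (negPf k0) /=.
by rewrite mulr1 mulr0 addr0 => /eqP; rewrite (negPf a0).
Qed.

Lemma alg1 (s t d X c G0 Gk C0 : algC) : s * s = 1 -> t * t = 1 -> d != 0 ->
  C0 = c * s * G0 -> s * (C0 * 2 + X * (t * d)) = c * (G0 * 2 + Gk * d) ->
  X = c * s * t * Gk.
Proof.
move=> hs ht d0 -> e.
have e2 : s * t * d * X = c * Gk * d.
  have h1 : s * (c * s * G0 * 2 + X * (t * d)) - 2 * c * G0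
      = s * t * d * X + 2 * c * G0 * (s * s - 1) by ring.
  move: h1; rewrite hs subrr mulr0 addr0 e => <-; ring.
apply: (mulIf d0).
have -> : X * d = (s * s) * (t * t) * X * d by rewrite hs ht !mul1r.
have -> : s * s * (t * t) * X * d = s * t * (s * t * d * X) by ring.
by rewrite e2; ring.
Qed.

Lemma xi_entry j y i : (xi j y) i 0 = sg j i * (y i 0)^*.
Proof. by rewrite mxE. Qed.
Lemma scale_entry (c : algC) (y : 'cV[algC]_5) i : (c *: y) i 0 = c * y i 0.
Proof. by rewrite mxE. Qed.

Lemma inH_vec j (a : nat) k : (j <= 4)%N -> k != ord0 -> (4 <= a * a)%N ->
  inH j (vec a%:R k (dd j k)).
Proof.
move=> hj k0 ha; split.
- by apply: vec_neq0 => //; rewrite pnatr_eq0; case: a ha.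
- rewrite hform_vec // dd_norm; case: ifP => _; apply: neg_val; lia.
- exists 1; rewrite scale1r xi_vec // ?conjC_nat // dd_conj mulrA sg2 mul1r //.
Qed.

Lemma stab_lambda j g : (j <= 4)%N -> StabR j g ->
  exists lam, forall i k, (g i k)^* = lam * sg j i * sg j k * g i k.
Proof.
move=> hj [[_ ug _ _] hmap _].
have km0 : (ord_max : 'I_5) != ord0 by [].
have H0 : inH j (vec 1 ord_max 0).
  split; first by apply: vec_neq0 => //; rewrite oner_eq0.
    by rewrite hform_vec // conjC1 mulr1 mul0r addr0 oppr_lt0 ltr01.
  by exists 1; rewrite scale1r xi_vec // ?conjC1 // conjC0 mulr0.
have [_ _ [c0 hc0]] := hmap _ H0.
have E0' : forall i, c0 * g i ord0 = sg j i * (g i ord0)^*.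
  move=> i; have := congr1 (fun M : 'cV[algC]_5 => M i 0) hc0 => /=.
  by rewrite xi_entry scale_entry !gvec !mulr1 !mulr0 !addr0 => ->.
have E0 : forall i, (g i ord0)^* = c0 * sg j i * g i ord0.
  move=> i; by rewrite mulrAC E0' mulrAC sg2 mul1r.
exists c0 => i k; case: (eqVneq k ord0) => [-> | k0]; first by rewrite sg0 // mulr1 E0.
have [_ _ [c1 hc1]] := hmap _ (@inH_vec j 2 k hj k0 (isT : (4 <= 2 * 2)%N)).
have [_ _ [c2 hc2]] := hmap _ (@inH_vec j 3 k hj k0 (isT : (4 <= 3 * 3)%N)).
have E1 : forall i, sg j i * (g i ord0 * 2%:R + g i k * dd j k)^* = c1 * (g i ord0 * 2%:R + g i k * dd j k).
  move=> i'; have := congr1 (fun M : 'cV[algC]_5 => M i' 0) hc1 => /=.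
  by rewrite xi_entry scale_entry !gvec.
have E2 : forall i, sg j i * (g i ord0 * 3%:R + g i k * dd j k)^* = c2 * (g i ord0 * 3%:R + g i k * dd j k).
  move=> i'; have := congr1 (fun M : 'cV[algC]_5 => M i' 0) hc2 => /=.
  by rewrite xi_entry scale_entry !gvec.
set z := vec (c0 + 2 * c1 - 3 * c2) k ((c1 - c2) * dd j k).
have gz : g *m z = 0.
  apply/matrixP => i' z'; rewrite (ord1 z') gvec mxE.
  have -> : g i' ord0 * (c0 + 2 * c1 - 3 * c2) + g i' k * ((c1 - c2) * dd j k)
     = c0 * g i' ord0 + c1 * (g i' ord0 * 2%:R + g i' k * dd j k)
       - c2 * (g i' ord0 * 3%:R + g i' k * dd j k) by ring.
  rewrite E0' -E1 -E2.
  have -> : forall (s x y w : algC), s * x + s * y - s * w = s * (x + y - w) by move=> *; ring.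
  rewrite -rmorphD -rmorphB.
  have -> : g i' ord0 + (g i' ord0 * 2%:R + g i' k * dd j k) - (g i' ord0 * 3%:R + g i' k * dd j k) = 0 by ring.
  by rewrite rmorph0 mulr0.
have z0 : z = 0 by rewrite -(mulKmx ug z) gz mulmx0.
have c12 : c1 = c2.
  move/matrixP: z0 => /(_ k 0); rewrite vecE mxE eqxx (negPf k0) mulr0 add0r mulr1.
  move/eqP; rewrite mulf_eq0 (negPf (dd_neq0 j k)) orbF subr_eq0 => /eqP //.
have c02 : c0 = c2.
  move/matrixP: z0 => /(_ ord0 0); rewrite vecE mxE eqxx eq_sym (negPf k0) mulr0 addr0 mulr1 c12.
  by move/eqP; rewrite (_ : c0 + 2 * c2 - 3 * c2 = c0 - c2); [rewrite subr_eq0 => /eqP | ring].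
have e := E1 i; rewrite c12 -c02 rmorphD /= rmorphM /= rmorphM /= conjC_nat dd_conj in e.
exact: (alg1 (sg2 j i) (sg2 j k) (dd_neq0 j k) (E0 i) e).
Qed.


Definition Sm j : 'M[algC]_5 := diag_mx (\row_i sg j i).

Lemma SmS j : Sm j *m Sm j = 1%:M.
Proof.
apply/matrixP => i k; rewrite /Sm mul_diag_mx !mxE.
case: (eqVneq i k) => [-> | ne] /=; first by rewrite !mulr1n sg2.
by rewrite !mulr0n mulr0.
Qed.

Lemma detS2 j : \det (Sm j) * \det (Sm j) = 1.
Proof. by rewrite -det_mulmx SmS det1. Qed.

Lemma conj_mx j (g : 'M[algC]_5) lam : (forall i k, (g i k)^* = lam * sg j i * sg j k * g i k) ->
  map_mx (@Num.conj algC) g = lam *: (Sm j *m g *m Sm j).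
Proof.
move=> h; apply/matrixP => i k; rewrite /Sm mul_mx_diag mul_diag_mx !mxE h; ring.
Qed.

Lemma isE_hsign i : isE (hsign i).
Proof. rewrite /hsign; case: (i == ord0); [exact: (inE_int (-1)) | exact: inE1]. Qed.
Lemma isE_sg j i : isE (sg j i).
Proof. rewrite /sg; case: ifP => _; [exact: (inE_int (-1)) | exact: inE1]. Qed.

Lemma lam_props j (g : 'M[algC]_5) lam : (j <= 4)%N -> Gamma g ->
  (forall i k, (g i k)^* = lam * sg j i * sg j k * g i k) ->
  [/\ isE lam, isE lam^-1, lam != 0 & lam ^+ 3 = 1].
Proof.
move=> hj hg hc.
have [gE ug giE _] := hg.
set w := \sum_i hsign i * sg j i * g i ord0 ^+ 2.
have wE : isE w.
  apply/EbP; rewrite -[Eb _]/(_ \in Eb); apply: rpred_sum => i _.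
  apply/EbP; apply: inEM; first apply: inEM; [exact: isE_hsign | exact: isE_sg |].
  by rewrite expr2; apply: inEM.
have lw : lam * w = -1.
  have J00 : Jm ord0 ord0 = -1 by rewrite /Jm !mxE /hsign eqxx /= mulr1n.
  have := gJg hg; move/matrixP => /(_ ord0 ord0); rewrite formE J00.
  move=> <-; rewrite /w mulr_sumr; apply: eq_bigr => i _.
  rewrite hc sg0 //; ring.
have cw : w^* = lam ^+ 2 * w.
  rewrite /w rmorph_sum mulr_sumr; apply: eq_bigr => i _.
  rewrite rmorphM /= rmorphM /= rmorphXn /= hc sg0 // sg_conj.
  have hs : (hsign i)^* = hsign i by rewrite /hsign; case: (i == ord0); rewrite ?rmorphN /= conjC1.
  rewrite hs; have := sg2 j i; move: (sg j i) => s hs2.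
  apply: (@sub_by _ _ _ (lam^+2 * hsign i * s * g i ord0 ^+2) _ hs2); ring.
have l0 : lam != 0 by apply/negP => /eqP l0; move: lw; rewrite l0 mul0r => /eqP; rewrite eq_sym oppr_eq0 oner_eq0.
have w0 : w != 0 by apply/negP => /eqP w0; move: lw; rewrite w0 mulr0 => /eqP; rewrite eq_sym oppr_eq0 oner_eq0.
have cl : lam^* * lam = 1.
  have e : lam^* * w^* = -1 by rewrite -rmorphM /= lw rmorphN /= conjC1.
  move: e; rewrite cw -lw => e.
  apply: (mulIf l0); apply: (mulIf w0); rewrite mul1r -e; ring.
have linv : lam^-1 = - w.
  by apply: (mulfI l0); rewrite divff // mulrN lw opprK.
have clv : lam^* = lam^-1 by apply: (mulIf l0); rewrite cl mulVf.
have lE : isE lam by rewrite -[lam]conjCK clv linv; apply: inE_conj; apply: inEN.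
have liE : isE lam^-1 by rewrite linv; apply: inEN.
have [_ l6] := unitE lE liE l0.
have dE := det_inE gE.
have diE := det_inE giE.
have du : \det g * \det (invmx g) = 1 by rewrite -det_mulmx mulmxV // det1.
have d0 : \det g != 0 by apply/negP => /eqP d0; move: du; rewrite d0 mul0r => /eqP; rewrite eq_sym oner_eq0.
have dinv : (\det g)^-1 = \det (invmx g) by apply: (mulfI d0); rewrite divff.
have [dn d6] := unitE dE (eq_ind_r isE diE dinv) d0.
have cd : (\det g)^* = lam ^+ 5 * \det g.
  rewrite -det_map_mx /= (conj_mx hc) detZ !det_mulmx.
  by rewrite mulrAC -[in RHS](mul1r (\det g)) -(detS2 j); ring.
have l5 : lam ^+ 5 * (\det g * \det g) = 1 by rewrite mulrA -cd mulrC dn.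
have l15 : lam ^+ 15 = 1.
  have := congr1 (fun x => x ^+ 3) l5; rewrite expr1n exprMn -exprM.
  have -> : (\det g * \det g) ^+ 3 = \det g ^+ 6 by rewrite -expr2 -exprM.
  by rewrite d6 mulr1.
split => //.
move: l15; rewrite (_ : 15 = 3 + 6 * 2)%N // exprD exprM l6 expr1n mulr1 //.
Qed.

Lemma stab_rel j g : (j <= 4)%N -> StabR j g -> exists A, rel j g A.
Proof.
move=> hj hS; have [lam hc] := stab_lambda hj hS.
have [hg _ _] := hS; have [gE _ _ _] := hg.
have [lE liE l0 l3] := lam_props hj hg hc.
have [lc _] := unitE lE liE l0.
have clam : lam^* = lam ^+ 2.
  by apply: (mulfI l0); rewrite lc -exprS l3.
set Av := fun i k => lam ^+ 2 * g i k * dd j k / dd j i.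
have l2E : isE (lam ^+ 2) by rewrite expr2; apply: inEM.
have Areal : forall i k, (Av i k)^* = Av i k.
  move=> i k; rewrite /Av rmorphM /= fmorphV /= rmorphM /= rmorphM /= rmorphXn /= clam hc !dd_conj.
  have := sg2 j k; have := sg_neq0 j i; have := dd_neq0 j i.
  move: (sg j i) (sg j k) (dd j i) (dd j k) (g i k) => s t b a G b0 s0 tt.
  have -> : (lam ^+ 2) ^+ 2 * (lam * s * t * G) * (t * a) / (s * b)
     = lam ^+ 3 * (t * t) * (lam ^+ 2 * G * a / b) by field; rewrite b0 s0.
  by rewrite l3 tt !mul1r.
have hA : forall i k, exists n : int, Av i k = n%:~R.
  move=> i k; have yE : isE (lam ^+ 2 * g i k) by apply: inEM.
  move: (Areal i k); rewrite /Av /dd.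
  case: (boolP (5 - j <= i)%N) => hi; case: (boolP (5 - j <= k)%N) => hk.
  - rewrite mulfK ?s3_neq0 //; exact: inE_real.
  - rewrite mulr1 => e.
    have [n hn] : exists n : int, lam ^+ 2 * g i k = n%:~R * s3.
      apply: inE_imag => //.
      have -> : lam ^+ 2 * g i k = (lam ^+ 2 * g i k / s3) * s3 by rewrite divfK ?s3_neq0.
      by rewrite rmorphM /= e s3_conj mulrN.
    by exists n; rewrite hn mulfK ?s3_neq0.
  - rewrite divr1 => e; apply: inE_real => //; apply: inEM => //; exact: inE_s3.
  - by rewrite divr1 mulr1; exact: inE_real.
have [F hF] : exists F : 'I_5 -> 'I_5 -> int, forall i k, Av i k = (F i k)%:~R.
  exists (fun i k => proj1_sig (constructive_indefinite_description _ (hA i k))).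
  by move=> i k; case: constructive_indefinite_description.
exists (\matrix_(i, k) F i k), lam; split => //.
apply/matrixP => i k; rewrite !mxE -hF /Av.
have := dd_neq0 j i; have := dd_neq0 j k; move: (dd j i) (dd j k) => a b b0 a0.
have -> : lam * (a / b * (lam ^+ 2 * g i k * b / a)) = lam ^+ 3 * g i k by field; rewrite a0 b0.
by rewrite l3 mul1r.
Qed.


Theorem theorem5p1 : forall j : nat, (j <= 4)%N -> PGammaR_iso_PO j.
Proof.
move=> j hj.
pose f g := epsilon (inhabits (0 : 'M[int]_5)) (rel j g).
have fspec : forall g A, rel j g A -> rel j g (f g).
  by move=> g A h; apply: epsilon_spec; exists A.
have fS : forall g, StabR j g -> rel j g (f g).
  by move=> g hS; have [A hA] := stab_rel hj hS; exact: fspec hA.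
exists f; split.
- move=> g hS; apply: APA_OPsi; apply: (rel_APA hj) (fS g hS).
  by case: hS.
- move=> g1 g2 h1 h2.
  have r12 : rel j (g1 *m g2) (f g1 *m f g2).
    have [nu1 [n1 e1 ei1 ge1]] := fS g1 h1.
    have [nu2 [n2 e2 ei2 ge2]] := fS g2 h2.
    exists (nu1 * nu2); split.
    + by rewrite mulf_neq0.
    + exact: inEM.
    + by rewrite invfM; apply: inEM.
    + have -> : g1 *m g2 = (nu1 *: Lift j (f g1)) *m (nu2 *: Lift j (f g2)) by rewrite -ge1 -ge2.
      by rewrite -scalemxAl -scalemxAr scalerA Lift_mul.
  exact: rel_uniq (fspec _ _ r12) r12.
- move=> g hS; split.
  + have [nu [n0 e ei ge]] := fS g hS.
    case=> hf; rewrite ge hf; clear ge.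
      by exists nu; split => //; rewrite Lift1 scalemx1.
    exists (- nu); split.
    * by rewrite oppr_eq0.
    * exact: inEN.
    * by rewrite invrN; apply: inEN.
    * by rewrite LiftN Lift1 scalerN -scaleNr scalemx1.
  + move=> [u [u0 uE uiE ge]].
    have r : rel j g 1%:M by exists u; split => //; rewrite Lift1 scalemx1.
    exact: rel_uniq (fspec _ _ r) r.
- move=> A hA; exists (Lift j A); split; first exact: Stab_Lift.
  have r : rel j (Lift j A) A.
    exists 1; split; [exact: oner_neq0 | exact: inE1 | by rewrite invr1; exact: inE1 | by rewrite scale1r].
  exact: rel_uniq (fspec _ _ r) r.
Qed.
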